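(* Let $(X,\mathcal B,\mu)$ be a probability space and $G$ an lcsc Abelian group with a translation-invariant metric $d$. Let $\varphi_n,\psi_n\colon X\to G$ be measurable maps taking values in a compact set $C\subset G$, with each $\psi_n$ taking values in a fixed finite set $F\subset C$. Assume that, weakly, $(\varphi_n)_*\mu\to\nu$, $(\psi_n)_*\mu\to\kappa$ and $(\varphi_n+\psi_n)_*\mu\to\rho$. Then for each $h_0\in\operatorname{supp}\kappa$ there exists $g_0\in\operatorname{supp}\nu$ with $h_0+g_0\in\operatorname{supp}\rho$; and for each $g_0\in\operatorname{supp}\nu$ there exists $h_0\in\operatorname{supp}\kappa$ with $h_0+g_0\in\operatorname{supp}\rho$. *)

(* Defs.v *)
From HB Require Import structures.
From mathcomp Require Import all_boot all_algebra.
From mathcomp Require Import all_classical all_reals all_analysis.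
Set Implicit Arguments. Unset Strict Implicit. Unset Printing Implicit Defensive.
Import GRing.Theory Num.Theory numFieldTopology.Exports.
Local Open Scope classical_set_scope.
Local Open Scope ring_scope.

(* To build
   the Borel sigma-algebra the library needs a pointed carrier; we use the
   alias [pt G] of G pointed at 0 (the point plays no mathematical role). *)
Definition pt (G : topologicalZmodType) : Type := G.
HB.instance Definition _ (G : topologicalZmodType) := Choice.copy (pt G) G.
HB.instance Definition _ (G : topologicalZmodType) :=
  isPointed.Build (pt G) (0 : G).

Definition borel (G : topologicalZmodType) : Type :=
  @g_sigma_algebraType (pt G) (@open G).

Definition lcsc (G : topologicalZmodType) : Prop :=
  locally_compact [set: G] /\ @second_countable G.

Definition translation_invariant_metric (R : realType) (G : topologicalZmodType)
    (d : G -> G -> R) : Prop :=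
  [/\ (forall x y, 0 <= d x y),
      (forall x y, d x y = 0 <-> x = y),
      (forall x y, d x y = d y x),
      (forall x y z, d x z <= d x y + d y z) &
      (forall x y z, d (x + z) (y + z) = d x y)] /\
      (forall (x : G) (A : set G),
          nbhs x A <-> exists2 e : R, 0 < e & [set y | d x y < e] `<=` A).

Definition weak_cvg (R : realType) (G : topologicalZmodType)
    (m : nat -> probability (borel G) R) (nu : probability (borel G) R) : Prop :=
  forall f : G -> R, continuous f -> (exists M : R, forall x, `|f x| <= M) ->
    ((fun n => \int[m n]_x (f x)%:E) @ \oo --> \int[nu]_x (f x)%:E)%E.

Definition msupp (R : realType) (G : topologicalZmodType)
    (nu : probability (borel G) R) : set G :=
  [set g | forall U : set G, open U -> U g -> (0 < nu U)%E].

(* Main.v *)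
Require Import Defs.
From HB Require Import structures.
From mathcomp Require Import all_boot all_algebra.
From mathcomp Require Import all_classical all_reals all_analysis.
From mathcomp Require Import lra ring measurable_realfun.
Import order.Order.TTheory GRing.Theory Num.Theory numFieldTopology.Exports.
Local Open Scope classical_set_scope.
Local Open Scope ring_scope.

Set Implicit Arguments.
Unset Strict Implicit.

Section Metric.
Variables (R : realType) (G : topologicalZmodType) (d : G -> G -> R).
Hypothesis Hd : translation_invariant_metric d.

Definition dball (x : G) (e : R) := [set y | d x y < e].

Lemma d_ge0 x y : 0 <= d x y. Proof. by case: Hd => -[]. Qed.
Lemma d_xx x : d x x = 0. Proof. by case: Hd => -[_ h _ _ _] _; apply/h. Qed.
Lemma d_sym x y : d x y = d y x. Proof. by case: Hd => -[]. Qed.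
Lemma d_tri x y z : d x z <= d x y + d y z. Proof. by case: Hd => -[]. Qed.
Lemma d_tr x y z : d (x + z) (y + z) = d x y. Proof. by case: Hd => -[]. Qed.
Lemma d_nbhs x A : nbhs x A <-> exists2 e : R, 0 < e & dball x e `<=` A.
Proof. by case: Hd => _; apply. Qed.

Lemma dball_open x e : open (dball x e).
Proof.
rewrite openE => y /= hy; apply/d_nbhs; exists (e - d x y); first by rewrite subr_gt0.
move=> z /= hz; rewrite /dball /=.
move: hz; rewrite /dball /=; have := d_tri x y z; lra.
Qed.

Lemma dball_center x e : 0 < e -> dball x e x.
Proof. by rewrite /dball /= d_xx. Qed.

Lemma d_cont x : continuous (fun y => d x y).
Proof.
move=> y; apply/cvgrPdist_lt => e e0.
have : nbhs y (dball y e) by apply/d_nbhs; exists e.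
apply: filterS => z; rewrite /dball /= => hz.
have h1 := d_tri x y z; have h2 := d_tri x z y; rewrite (d_sym z y) in h2.
rewrite ltr_norml; apply/andP; split; lra.
Qed.

Definition bump x r y := Num.max 0 (1 - d x y / r).

Lemma max0_lip (a b : R) : `|Num.max 0 a - Num.max 0 b| <= `|a - b|.
Proof.
have [ha|ha] := lerP 0 a; have [hb|hb] := lerP 0 b;
  rewrite ?(max_r ha) ?(max_r hb) ?(max_l (ltW ha)) ?(max_l (ltW hb)).
all: rewrite ?subrr ?normr0 ?normr_ge0 //.
all: rewrite ?sub0r ?subr0 ?normrN.
all: try (rewrite ger0_norm; last lra).
all: try (rewrite ler_norml; apply/andP; split; lra).
all: first [rewrite ger0_norm; lra | rewrite ler0_norm; lra].
Qed.

Lemma bump_cont x r : 0 < r -> continuous (bump x r).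
Proof.
move=> r0 y; apply/cvgrPdist_lt => e e0.
have : nbhs y (dball y (e * r)) by apply/d_nbhs; exists (e * r); rewrite ?mulr_gt0.
apply: filterS => z; rewrite /dball /= => hz.
apply: le_lt_trans (max0_lip _ _) _.
have -> : 1 - d x y / r - (1 - d x z / r) = (d x z - d x y) / r by field; lra.
rewrite normrM (gtr0_norm (_ : 0 < r^-1)) ?invr_gt0 // -(ltr_pM2r r0) -mulrA mulVf ?gt_eqF // mulr1.
have h1 := d_tri x y z; have h2 := d_tri x z y; rewrite (d_sym z y) in h2.
apply: le_lt_trans hz; rewrite ler_norml; apply/andP; split; lra.
Qed.

Lemma bump_ge0 x r y : 0 <= bump x r y.
Proof. by rewrite /bump le_max lexx. Qed.

Lemma bump_le1 x r y : 0 < r -> bump x r y <= 1.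
Proof.
move=> r0; rewrite /bump ge_max ler01 /= gerBl divr_ge0 // ?d_ge0 //; exact: ltW.
Qed.

Lemma bump_out x r y : 0 < r -> r <= d x y -> bump x r y = 0.
Proof.
move=> r0 h; rewrite /bump max_l //; rewrite subr_le0 ler_pdivlMr // mul1r //.
Qed.

Lemma bump_half x r y : 0 < r -> d x y < r / 2 -> 2^-1 <= bump x r y.
Proof.
move=> r0 h; rewrite /bump le_max; apply/orP; right.
have : d x y / r < 2^-1 by rewrite ltr_pdivrMr //; lra.
lra.
Qed.


Lemma open_mG (U : set G) : open U -> @measurable _ (borel G) U.
Proof. by move=> oU; apply: sub_sigma_algebra. Qed.

Lemma dball_m x e : @measurable _ (borel G) (dball x e).
Proof. by apply: open_mG; apply: dball_open. Qed.

Lemma cont_mfun (f : G -> R) : continuous f -> measurable_fun [set: borel G] f.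
Proof.
move=> cf; apply: (measurability _ (measurable_realfun.RGenOpens.measurableE R)).
move=> _ [_ [a [b ->]] <-]; rewrite setTI; apply: open_mG.
by move: cf => /continuousP; apply; exact: interval_open.
Qed.

Section Int.
Variable m : probability (borel G) R.

Lemma int_le_meas (f : G -> R) (A : set G) : @measurable _ (borel G) A ->
  continuous f -> (forall y, 0 <= f y <= 1) -> (forall y, ~ A y -> f y = 0) ->
  (\int[m]_x (f x)%:E <= m A)%E.
Proof.
move=> mA cf f01 f0.
have -> : m A = (\int[m]_x (\1_A x)%:E)%E by rewrite integral_indic // setIT.
apply: ge0_le_integral => //.
- by move=> y _; rewrite lee_fin; have /andP[] := f01 y.
- by apply/measurable_EFinP; apply: cont_mfun.
- by apply/measurable_EFinP; apply: measurable_indic.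
- move=> y _; rewrite lee_fin /indic; have [Ay|nAy] := pselect (A y).
    by rewrite mem_set //; have /andP[] := f01 y.
  by rewrite memNset // f0.
Qed.

Lemma int_ge_meas (f : G -> R) (A : set G) (c : R) : @measurable _ (borel G) A ->
  continuous f -> 0 <= c -> (forall y, 0 <= f y) -> (forall y, A y -> c <= f y) ->
  (c%:E * m A <= \int[m]_x (f x)%:E)%E.
Proof.
move=> mA cf c0 f0 fA.
have -> : (c%:E * m A = \int[m]_x (c%:E * (\1_A x)%:E))%E.
  rewrite (@ge0_integralZl_EFin _ _ _ m setT measurableT (fun x => (\1_A x)%:E)).
  - by rewrite integral_indic ?setIT.
  - by move=> y _; rewrite lee_fin.
  - by apply/measurable_EFinP; apply: measurable_indic.
  - by [].
apply: ge0_le_integral => //.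
- by move=> y _; rewrite -EFinM lee_fin mulr_ge0.
- by apply/measurable_EFinP; apply: measurable_funM => //; exact: measurable_indic.
- by apply/measurable_EFinP; apply: cont_mfun.
- move=> y _; rewrite -EFinM lee_fin /indic; have [Ay|nAy] := pselect (A y).
    by rewrite mem_set // mulr1 fA.
  by rewrite memNset // mulr0 f0.
Qed.

End Int.

Lemma in_bigU (T : eqType) (U : Type) (s : seq T) (A : T -> set U) x i :
  i \in s -> A i x -> (\big[setU/set0]_(j <- s) A j) x.
Proof.
elim: s => [|a s IH] //; rewrite in_cons big_cons => /orP[/eqP -> h|hi h].
  by left.
by right; apply: IH.
Qed.

Lemma not_msupp (m : probability (borel G) R) y : ~ msupp m y ->
  exists2 U : set G, open U & U y /\ m U = 0%E.
Proof.
move=> h; apply: contrapT => h2; apply: h => U oU Uy.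
rewrite lt0e measure_ge0 andbT; apply/negP => /eqP hU; by apply: h2; exists U.
Qed.

Lemma tri2 a b p q r1 r2 : d a p < r1 -> d b q < r2 -> d (a + b) (q + p) < r1 + r2.
Proof.
move=> h1 h2; apply: le_lt_trans (d_tri (a + b) (p + b) (q + p)) _.
have -> : d (a + b) (p + b) = d a p by apply: d_tr.
have -> : d (p + b) (q + p) = d b q by rewrite (addrC p b); apply: d_tr.
by apply: ltrD.
Qed.

Section Prob.
Variables (dX : measure_display) (X : measurableType dX) (mu : probability X R).

Definition vanish (A : nat -> set X) :=
  forall eps : R, 0 < eps -> \forall n \near \oo, (mu (A n) < eps%:E)%E.

Lemma vanish_sub (A B : nat -> set X) : (forall n, measurable (A n)) ->
  (forall n, measurable (B n)) -> (forall n, A n `<=` B n) -> vanish B -> vanish A.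
Proof.
move=> mA mB AB vB e e0; apply: filterS (vB e e0) => n.
apply: le_lt_trans; apply: le_measure => //; rewrite inE //.
Qed.

Lemma vanish_U (A B : nat -> set X) : (forall n, measurable (A n)) ->
  (forall n, measurable (B n)) -> vanish A -> vanish B ->
  vanish (fun n => A n `|` B n).
Proof.
move=> mA mB vA vB e e0.
have e2 : 0 < e / 2 by rewrite divr_gt0.
apply: filterS2 (vA _ e2) (vB _ e2) => n hA hB.
apply: le_lt_trans (measureU2 _ (mA n) (mB n)) _.
have -> : e = e / 2 + e / 2 by field.
by rewrite EFinD; apply: lteD.
Qed.

Lemma vanish_big (T : eqType) (s : seq T) (A : T -> nat -> set X) :
  (forall i n, measurable (A i n)) -> (forall i, i \in s -> vanish (A i)) ->
  vanish (fun n => \big[setU/set0]_(i <- s) A i n).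
Proof.
move=> mA; elim: s => [|a s IH] hs.
  move=> e e0; apply: nearW => n; rewrite big_nil measure0 lte_fin //.
under [X in vanish X]funext => n do rewrite big_cons.
apply: vanish_U => //.
- by move=> n; apply: bigsetU_measurable.
- by apply: hs; rewrite mem_head.
- by apply: IH => i hi; apply: hs; rewrite in_cons hi orbT.
Qed.

Lemma ehalf (a : \bar R) (e : R) : (0 <= a)%E -> (2^-1%:E * a < (e / 2)%:E)%E ->
  (a < e%:E)%E.
Proof.
case: a => [a||] //= _.
- by rewrite -EFinM !lte_fin; lra.
- by rewrite gt0_muley ?lte_fin.
Qed.

Variable Y : nat -> {mfun X >-> borel G}.

Lemma vanish_of (m : probability (borel G) R) (y : G) :
  weak_cvg (fun n => distribution mu (Y n)) m ->
  (exists2 U : set G, open U & U y /\ m U = 0%E) ->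
  exists2 r : R, 0 < r & vanish (fun n => Y n @^-1` dball y r).
Proof.
move=> wc [U oU [Uy mU0]].
have /d_nbhs [e e0 sU] : nbhs y U by apply: open_nbhs_nbhs.
exists (e / 2); first by rewrite divr_gt0.
have cf := @bump_cont y e e0.
have bf : exists M : R, forall x, `|bump y e x| <= M.
  exists 1 => x; rewrite ger0_norm ?bump_ge0 //; exact: bump_le1.
have := wc _ cf bf.
have -> : (\int[m]_x (bump y e x)%:E = 0)%E.
  apply/eqP; rewrite eq_le; apply/andP; split; last by apply: integral_ge0 => x _; rewrite lee_fin bump_ge0.
  rewrite -mU0; apply: le_trans (@int_le_meas m _ _ (dball_m y e) cf _ _) _.
  - by move=> x; rewrite bump_ge0 bump_le1.
  - move=> x hx; apply: bump_out => //; rewrite leNgt; apply/negP => h; exact: hx.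
  - apply: le_measure; rewrite ?inE //; [exact: dball_m | exact: open_mG].
move=> H eps eps0.
have eps2 : (0 < (eps / 2)%:E)%E by rewrite lte_fin divr_gt0.
have /= := H (fun v => (v < (eps / 2)%:E)%E) (open_ereal_lt' eps2).
move=> hH; near=> n; apply: (@ehalf _ eps); first exact: measure_ge0.
apply: le_lt_trans.
  have := @int_ge_meas (distribution mu (Y n)) _ _ (2^-1) (dball_m y (e / 2)) cf _ (@bump_ge0 y e) _.
  apply.
  - by rewrite invr_ge0.
  - by move=> x hx; apply: bump_half.
near: n; exact: hH.
Unshelve. all: end_near.
Qed.

Lemma pos_of (m : probability (borel G) R) (y : G) (r : R) :
  weak_cvg (fun n => distribution mu (Y n)) m -> msupp m y -> 0 < r ->
  exists2 c : R, 0 < c &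
    \forall n \near \oo, (c%:E <= mu (Y n @^-1` dball y r))%E.
Proof.
move=> wc my r0.
have cf := @bump_cont y r r0.
have bf : exists M : R, forall x, `|bump y r x| <= M.
  exists 1 => x; rewrite ger0_norm ?bump_ge0 //; exact: bump_le1.
have b01 : forall x, 0 <= bump y r x <= 1 by move=> x; rewrite bump_ge0 bump_le1.
have bout : forall x, ~ dball y r x -> bump y r x = 0.
  move=> x hx; apply: bump_out => //; rewrite leNgt; apply/negP => h; exact: hx.
set L := (\int[m]_x (bump y r x)%:E)%E.
have Lle : (L <= 1)%E.
  apply: le_trans (@int_le_meas m _ _ (dball_m y r) cf b01 bout) _.
  by apply: probability_le1; apply: dball_m.
have Lgt : (0 < L)%E.
  apply: lt_le_trans (@int_ge_meas m _ _ (2^-1) (dball_m y (r / 2)) cf _ (@bump_ge0 y r) _).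
  - apply: mule_gt0; first by rewrite lte_fin invr_gt0.
    apply: my; first exact: dball_open.
    by apply: dball_center; rewrite divr_gt0.
  - by rewrite invr_ge0.
  - by move=> x hx; apply: bump_half.
have Lfin : L \is a fin_num by rewrite ge0_fin_numE ?(ltW Lgt) // (le_lt_trans Lle) ?ltry.
have fL : 0 < fine L by apply: fine_gt0; rewrite Lgt (le_lt_trans Lle) ?ltry.
exists (fine L / 2); first by rewrite divr_gt0.
have cL : ((fine L / 2)%:E < L)%E by rewrite -[X in (_ < X)%E](fineK Lfin) lte_fin; lra.
have /= hH := wc _ cf bf (fun v => ((fine L / 2)%:E < v)%E) (open_ereal_gt' cL).
near=> n; apply: ltW.
apply: (lt_le_trans _ (@int_le_meas (distribution mu (Y n)) _ _ (dball_m y r) cf b01 bout)).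
near: n; exact: hH.
Unshelve. all: end_near.
Qed.

End Prob.
End Metric.

Lemma min_pos (R : realType) (T : eqType) (s : seq T) (r : T -> R) :
  (forall i, 0 < r i) -> exists2 m, 0 < m & forall i, i \in s -> m <= r i.
Proof.
move=> r0; elim: s => [|a s [m m0 hm]]; first by exists 1.
exists (Num.min m (r a)); first by rewrite lt_min m0 r0.
move=> i; rewrite in_cons => /orP[/eqP ->|hi]; first by rewrite ge_min lexx orbT.
by rewrite ge_min hm.
Qed.

Definition ptop (G : topologicalZmodType) : Type := G.
HB.instance Definition _ (G : topologicalZmodType) := Topological.copy (ptop G) G.
HB.instance Definition _ (G : topologicalZmodType) := isPointed.Build (ptop G) (GRing.zero : G).

Lemma cc (G : topologicalZmodType) (C : set G) : compact C -> @cover_compact (ptop G) C.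
Proof. by move=> c; rewrite -compact_cover. Qed.


Unset Implicit Arguments.

Theorem lemma2p4 (R : realType) (dX : measure_display) (X : measurableType dX)
    (mu : probability X R) (G : topologicalZmodType) (d : G -> G -> R)
    (phi psi chi : nat -> {mfun X >-> borel G})
    (C F : set G) (nu kappa rho : probability (borel G) R) :
  lcsc G ->
  translation_invariant_metric d ->
  compact C ->
  finite_set F -> F `<=` C ->
  (forall n x, C (phi n x)) ->
  (forall n x, F (psi n x)) ->
  (forall n x, chi n x = @GRing.add G (phi n x) (psi n x)) ->
  weak_cvg (fun n => distribution mu (phi n)) nu ->
  weak_cvg (fun n => distribution mu (psi n)) kappa ->
  weak_cvg (fun n => distribution mu (chi n)) rho ->
  (forall h0, msupp kappa h0 ->
     exists2 g0, msupp nu g0 & msupp rho (@GRing.add G h0 g0)) /\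
  (forall g0, msupp nu g0 ->
     exists2 h0, msupp kappa h0 & msupp rho (@GRing.add G h0 g0)).
Proof.
move=> _ Hd cC finF FC phiC psiF chiE wphi wpsi wchi.
have mP (Y : nat -> {mfun X >-> borel G}) n g r : measurable (Y n @^-1` dball d g r).
  by apply: measurable_funPTI; apply: dball_m.
have contra (P : Prop) (A : nat -> set X) c : 0 < c -> (forall n, measurable (A n)) ->
    vanish mu A -> (\forall n \near \oo, (c%:E <= mu (A n))%E) -> P.
  move=> c0 mA vA hc; have : \forall n \near \oo, False.
    apply: filterS2 hc (vA c c0) => n h1 h2.
    by move: (le_lt_trans h1 h2); rewrite ltxx.
  by case/filter_ex.
split.
- move=> h0 kh0; apply: contrapT => Hno.
  have hP : forall g, exists r : R, 0 < r /\
      (vanish mu (fun n => phi n @^-1` dball d g r) \/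
       vanish mu (fun n => chi n @^-1` dball d (h0 + g) r)).
    move=> g; have [ng|ng] := pselect (msupp nu g).
      have [rg|rg] := pselect (msupp rho (h0 + g)); first by exfalso; apply: Hno; exists g.
      have [r r0 hr] := vanish_of Hd wchi (not_msupp rg).
      by exists r; split => //; right.
    have [r r0 hr] := vanish_of Hd wphi (not_msupp ng).
    by exists r; split => //; left.
  have [Rg HRg] := choice hP.
  have Rg0 g : 0 < Rg g / 2 by rewrite divr_gt0 //; case: (HRg g).
  have hop : forall g, C g -> open (dball d g (Rg g / 2)).
    by move=> g _; apply: dball_open.
  have hcv : C `<=` cover C (fun g => dball d g (Rg g / 2)).
    by move=> g Cg; exists g => //; apply: dball_center.
  have [D' sD' cD'] := cc cC hop hcv.
  have [m0 m00 hm0] := min_pos (finmap.enum_fset D') Rg0.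
  have [c c0 hc] := pos_of Hd wpsi kh0 m00.
  apply: (contra _ _ c c0 (fun n => mP psi n h0 m0)) hc.
  apply: (vanish_sub (B := fun n => \big[setU/set0]_(g <- finmap.enum_fset D')
       (psi n @^-1` dball d h0 m0 `&` phi n @^-1` dball d g (Rg g / 2)))).
  - by move=> n; apply: mP.
  - move=> n; apply: bigsetU_measurable => g _; apply: measurableI; apply: mP.
  - move=> n x hx; have [g Dg hg] := cD' _ (phiC n x).
    by apply: (@in_bigU _ _ _ _ _ g) => //.
  apply: vanish_big.
    by move=> g n; apply: measurableI; apply: mP.
  move=> g gD; have hmg := hm0 g gD.
  have [Rg0' [v|v]] := HRg g.
  - apply: vanish_sub v; [|by move=> n; apply: mP|].
      by move=> n; apply: measurableI; apply: mP.
    move=> n x [_ hx]; rewrite /dball /= in hx *; lra.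
  - apply: vanish_sub v; [|by move=> n; apply: mP|].
      by move=> n; apply: measurableI; apply: mP.
    move=> n x [hx1 hx2]; rewrite /dball /= in hx1 hx2 *; rewrite chiE.
    have := tri2 Hd hx1 hx2; lra.
- move=> g0 ng0; apply: contrapT => Hno.
  have hP : forall h, exists r : R, 0 < r /\
      (vanish mu (fun n => psi n @^-1` dball d h r) \/
       vanish mu (fun n => chi n @^-1` dball d (h + g0) r)).
    move=> h; have [kh|kh] := pselect (msupp kappa h).
      have [rh|rh] := pselect (msupp rho (h + g0)); first by exfalso; apply: Hno; exists h.
      have [r r0 hr] := vanish_of Hd wchi (not_msupp rh).
      by exists r; split => //; right.
    have [r r0 hr] := vanish_of Hd wpsi (not_msupp kh).
    by exists r; split => //; left.
  have [Rh HRh] := choice hP.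
  have Rh0 h : 0 < Rh h / 2 by rewrite divr_gt0 //; case: (HRh h).
  have [s sF] := proj1 (finite_seqP F) finF.
  have [m0 m00 hm0] := min_pos s Rh0.
  have [c c0 hc] := pos_of Hd wphi ng0 m00.
  apply: (contra _ _ c c0 (fun n => mP phi n g0 m0)) hc.
  apply: (vanish_sub (B := fun n => \big[setU/set0]_(h <- s)
       (psi n @^-1` dball d h (Rh h / 2) `&` phi n @^-1` dball d g0 m0))).
  - by move=> n; apply: mP.
  - move=> n; apply: bigsetU_measurable => h _; apply: measurableI; apply: mP.
  - move=> n x hx; have : F (psi n x) by apply: psiF.
    rewrite sF /= => hin.
    apply: (@in_bigU _ _ _ _ _ (psi n x)) => //; split => //.
    exact: dball_center.
  apply: vanish_big.
    by move=> h n; apply: measurableI; apply: mP.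
  move=> h hs; have hmh := hm0 h hs.
  have [Rh0' [v|v]] := HRh h.
  - apply: vanish_sub v; [|by move=> n; apply: mP|].
      by move=> n; apply: measurableI; apply: mP.
    move=> n x [hx _]; rewrite /dball /= in hx *; lra.
  - apply: vanish_sub v; [|by move=> n; apply: mP|].
      by move=> n; apply: measurableI; apply: mP.
    move=> n x [hx1 hx2]; rewrite /dball /= in hx1 hx2 *; rewrite chiE.
    have := tri2 Hd hx1 hx2; lra.
Qed.
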